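(* Let $E$ be a Banach lattice and $F$ a Dedekind complete Banach lattice, and let $\mathcal{P}$ be a linear subspace of $\mathrm{L}(E,F)$ satisfying the domination property. Then the set $\mathrm{r\text{-}}\mathcal{P}(E,F)$ of r-$\mathcal{P}$-operators is an order ideal in the Dedekind complete vector lattice $\mathrm{L}_r(E,F)$ of regular operators.
   Context: All vector spaces are real; $\mathrm{L}(E,F)$ is the space of bounded linear operators, ordered by $S\le T$ iff $T-S$ is positive; $\mathrm{L}_r(E,F)$ is the space of regular operators (differences of positive operators). An operator $T:E\to F$ is an r-$\mathcal{P}$-operator if $T=T_1-T_2$ with $T_1,T_2$ positive operators belonging to $\mathcal{P}$. $\mathcal{P}$ satisfies the domination property if $0\le S\le T\in\mathcal{P}$ implies $S\in\mathcal{P}$. *)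

(* Defs.v *)
(* Real Banach lattices are modelled as complete
   normed modules over a realType R, equipped with an order relation satisfying
   the vector-lattice axioms and the Banach-lattice norm compatibility. *)
From HB Require Import structures.
From mathcomp Require Import all_boot all_order all_algebra.
From mathcomp Require Import all_classical all_reals all_analysis.
Set Implicit Arguments. Unset Strict Implicit. Unset Printing Implicit Defensive.
Import Order.TTheory GRing.Theory Num.Theory.
Import numFieldNormedType.Exports.
Local Open Scope ring_scope.
Local Open Scope classical_set_scope.

Section Defs.
Variable R : realType.

Definition is_ub {T : Type} (le : T -> T -> Prop) (A : set T) (u : T) :=
  forall a, A a -> le a u.

Definition is_sup {T : Type} (le : T -> T -> Prop) (A : set T) (s : T) :=
  is_ub le A s /\ forall u, is_ub le A u -> le s u.

Definition is_sup2 {T : Type} (le : T -> T -> Prop) (x y s : T) :=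
  is_sup le [set x; y] s.

Definition partial_order {T : Type} (le : T -> T -> Prop) :=
  [/\ (forall x, le x x),
      (forall x y, le x y -> le y x -> x = y) &
      (forall x y z, le x y -> le y z -> le x z)].

Definition vector_lattice {V : lmodType R} (le : V -> V -> Prop) :=
  [/\ partial_order le,
      (forall x y z, le x y -> le (x + z) (y + z)),
      (forall (a : R) x y, 0 <= a -> le x y -> le (a *: x) (a *: y)) &
      (forall x y, exists s, is_sup2 le x y s)].

Definition is_modulus {V : lmodType R} (le : V -> V -> Prop) (x m : V) :=
  is_sup2 le x (- x) m.

Definition banach_lattice {E : completeNormedModType R} (le : E -> E -> Prop) :=
  vector_lattice le /\
  forall x y mx my, is_modulus le x mx -> is_modulus le y my ->
    le mx my -> `|x| <= `|y|.

Definition dedekind_complete {T : Type} (le : T -> T -> Prop) :=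
  forall A : set T, A !=set0 -> (exists u, is_ub le A u) -> exists s, is_sup le A s.

Section Operators.
Variables (E F : completeNormedModType R).
Variables (leE : E -> E -> Prop) (leF : F -> F -> Prop).

Definition linear_op (T : E -> F) :=
  forall (a : R) x y, T (a *: x + y) = a *: T x + T y.

Definition bounded_op (T : E -> F) :=
  linear_op T /\ exists M : R, forall x, `|T x| <= M * `|x|.

Definition positive_op (T : E -> F) :=
  forall x, leE 0 x -> leF 0 (T x).

Definition op_le (S T : E -> F) := positive_op (T \- S).

Definition op_subspace (P : set (E -> F)) :=
  [/\ P `<=` bounded_op, P (fun _ => 0),
      (forall S T, P S -> P T -> P (S \+ T)) &
      (forall (a : R) T, P T -> P (fun x => a *: T x))].

Definition domination_property (P : set (E -> F)) :=
  forall S T, bounded_op S -> positive_op S -> op_le S T -> P T -> P S.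

Definition regular_op (T : E -> F) :=
  exists T1 T2, [/\ bounded_op T1, positive_op T1, bounded_op T2,
                    positive_op T2 & T = T1 \- T2].

Definition r_P_op (P : set (E -> F)) (T : E -> F) :=
  exists T1 T2, [/\ P T1, positive_op T1, P T2, positive_op T2 & T = T1 \- T2].

(* M is the modulus |S| = S \/ (-S) computed in the ordered space L_r(E,F)
   (least upper bound of {S, -S} among regular operators, for the operator order) *)
Definition reg_modulus (S M : E -> F) :=
  [/\ regular_op M, op_le S M, op_le (\- S) M &
      forall U, regular_op U -> op_le S U -> op_le (\- S) U -> op_le M U].

Definition order_ideal_Lr (I : set (E -> F)) :=
  [/\ I `<=` regular_op, I (fun _ => 0),
      (forall S T, I S -> I T -> I (S \+ T)),
      (forall (a : R) T, I T -> I (fun x => a *: T x)) &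
      (forall S T mS mT, regular_op S -> I T -> reg_modulus S mS ->
         reg_modulus T mT -> op_le mS mT -> I S)].

End Operators.
End Defs.

(* Main.v *)
Require Import Defs.
From mathcomp Require Import all_boot all_order all_algebra.
From mathcomp Require Import all_classical all_reals all_analysis.
Import Order.TTheory GRing.Theory Num.Theory.
Import numFieldNormedType.Exports.
Set Implicit Arguments. Unset Strict Implicit.
Local Open Scope ring_scope.
Local Open Scope classical_set_scope.

Section Helpers.
Variables (R : realType) (E F : completeNormedModType R).
Variables (leE : E -> E -> Prop) (leF : F -> F -> Prop).
Hypothesis hv : vector_lattice leF.

Lemma posF_add (a b : F) : leF 0 a -> leF 0 b -> leF 0 (a + b).
Proof.
case: hv => [[refl anti trans] hadd _ _] ha hb.
have := hadd _ _ b ha; rewrite add0r => h; exact: trans hb h.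
Qed.

Lemma posF_scale (c : R) (a : F) : 0 <= c -> leF 0 a -> leF 0 (c *: a).
Proof.
case: hv => _ _ hsc _ hc ha.
have := hsc _ _ _ hc ha; by rewrite scaler0.
Qed.

Lemma posF_refl : leF 0 0.
Proof. by case: hv => [[refl _ _] _ _ _]. Qed.

Lemma op_le_trans (A B C : E -> F) :
  op_le leE leF A B -> op_le leE leF B C -> op_le leE leF A C.
Proof.
move=> h1 h2 x hx; have := posF_add (h2 x hx) (h1 x hx).
by rewrite /= addrA subrK.
Qed.

Lemma bnd_comb (a b : R) (S T : E -> F) :
  bounded_op S -> bounded_op T -> bounded_op (fun x => a *: S x + b *: T x).
Proof.
move=> [lS [M1 hM1]] [lT [M2 hM2]]; split.
  move=> c x y; rewrite lS lT;rewrite !scalerDr !scalerA [a * c]mulrC [b * c]mulrC -!scalerA.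
  by rewrite addrACA.
exists (`|a| * M1 + `|b| * M2) => x.
apply: (le_trans (ler_normD _ _)); rewrite !normrZ mulrDl -!mulrA.
by apply: lerD; apply: ler_wpM2l.
Qed.

Lemma regular_bounded (T : E -> F) : regular_op leE leF T -> bounded_op T.
Proof.
move=> [T1 [T2 [b1 _ b2 _ ->]]].
have := bnd_comb 1 (-1) b1 b2.
have -> : (fun x => 1 *: T1 x + (-1) *: T2 x) = T1 \- T2.
  by apply: funext => x /=; rewrite scale1r scaleN1r.
by [].
Qed.

End Helpers.

Theorem proposition3p5 (R : realType) (E F : completeNormedModType R)
  (leE : E -> E -> Prop) (leF : F -> F -> Prop)
  (hE : banach_lattice leE) (hF : banach_lattice leF)
  (hFd : dedekind_complete leF)
  (P : set (E -> F))
  (hP : op_subspace P) (hdom : domination_property leE leF P) :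
  order_ideal_Lr leE leF (r_P_op leE leF P).
Proof.
case: hF => hv _.
case: hP => Pb P0 PD PZ.
have pos0 : positive_op leE leF (fun _ => 0) by move=> x _; exact: posF_refl.
split.
- move=> T [T1 [T2 [p1 q1 p2 q2 ->]]].
  by exists T1, T2; split => //; apply: Pb.
- exists (fun _ => 0), (fun _ => 0); split => //.
  by apply: funext => x /=; rewrite subr0.
- move=> S T [S1 [S2 [p1 q1 p2 q2 ->]]] [T1 [T2 [r1 s1 r2 s2 ->]]].
  exists (S1 \+ T1), (S2 \+ T2); split.
  + exact: PD.
  + by move=> x hx; apply: posF_add => //; [apply: q1|apply: s1].
  + exact: PD.
  + by move=> x hx; apply: posF_add => //; [apply: q2|apply: s2].
  + by apply: funext => x /=; rewrite opprD addrACA.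
- move=> a T [T1 [T2 [p1 q1 p2 q2 ->]]].
  have [ha|ha] := leP 0 a.
    exists (fun x => a *: T1 x), (fun x => a *: T2 x); split.
    + exact: PZ.
    + by move=> x hx; apply: posF_scale => //; apply: q1.
    + exact: PZ.
    + by move=> x hx; apply: posF_scale => //; apply: q2.
    + by apply: funext => x /=; rewrite scalerBr.
  have ha' : 0 <= - a by rewrite oppr_ge0 ltW.
  exists (fun x => (- a) *: T2 x), (fun x => (- a) *: T1 x); split.
  + exact: PZ.
  + by move=> x hx; apply: posF_scale => //; apply: q2.
  + exact: PZ.
  + by move=> x hx; apply: posF_scale => //; apply: q1.
  + by apply: funext => x /=; rewrite scalerBr !scaleNr opprK addrC.
- move=> S T mS mT Sreg [T1 [T2 [p1 q1 p2 q2 ->]]] [mSreg leSm lenSm _]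
    [_ _ _ mTmin] lemm.
  set U := T1 \+ T2.
  have PU : P U by exact: PD.
  have bU : bounded_op U by apply: Pb.
  have regU : regular_op leE leF U.
    exists U, (fun _ => 0); split => //.
    - by move=> x hx; apply: posF_add => //; [apply: q1|apply: q2].
    - by apply: Pb.
    - by apply: funext => x /=; rewrite subr0.
  have le1 : op_le leE leF (T1 \- T2) U.
    move=> x hx; have := posF_add hv (q2 x hx) (q2 x hx).
    by rewrite /U /= opprB addrA addrAC [T1 x + _]addrC addrK.
  have le2 : op_le leE leF (\- (T1 \- T2)) U.
    move=> x hx; have := posF_add hv (q1 x hx) (q1 x hx).
    by rewrite /U /= opprK addrA addrAC addrK.
  have mTU := mTmin U regU le1 le2.
  have bS := regular_bounded Sreg.
  have bmS := regular_bounded mSreg.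
  set A := fun x => (2^-1 : R) *: mS x + (2^-1 : R) *: S x.
  set B := fun x => (2^-1 : R) *: mS x + (- 2^-1 : R) *: S x.
  have h2 : (0 : R) <= 2^-1 by rewrite invr_ge0.
  have bA : bounded_op A by apply: bnd_comb.
  have bB : bounded_op B by apply: bnd_comb.
  have pA : positive_op leE leF A.
    move=> x hx; have := posF_scale hv h2 (lenSm x hx).
    by rewrite /A /= opprK scalerDr.
  have pB : positive_op leE leF B.
    move=> x hx; have := posF_scale hv h2 (leSm x hx).
    by rewrite /B /= scalerBr scaleNr.
  have hs : forall v : F, v = 2^-1 *: v + 2^-1 *: v.
    by move=> v; rewrite -scalerDl -div1r -splitr scale1r.
  have AmS : op_le leE leF A mS.
    move=> x hx; have := posF_scale hv h2 (leSm x hx); rewrite /A /=.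
    suff -> : mS x - (2^-1 *: mS x + 2^-1 *: S x) = 2^-1 *: (mS x - S x) by [].
    by rewrite {1}[mS x]hs scalerBr opprD addrACA subrr add0r.
  have BmS : op_le leE leF B mS.
    move=> x hx; have := posF_scale hv h2 (lenSm x hx); rewrite /B /=.
    suff -> : mS x - (2^-1 *: mS x + (- 2^-1) *: S x) = 2^-1 *: (mS x - - S x) by [].
    by rewrite {1}[mS x]hs scalerBr opprD addrACA subrr add0r scaleNr scalerN.
  exists A, B; split => //.
  + apply: (hdom A U bA pA _ PU).
    by apply: (op_le_trans hv AmS); apply: (op_le_trans hv lemm).
  + apply: (hdom B U bB pB _ PU).
    by apply: (op_le_trans hv BmS); apply: (op_le_trans hv lemm).
  + apply: funext => x; rewrite /A /B /= opprD addrACA subrr add0r scaleNr opprK.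
    by rewrite -scalerDl -div1r -splitr scale1r.
Qed.
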